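(* West's bijection from $\mathrm{Av}_n(123)$ to $\mathrm{Av}_n(132)$ maps $\mathrm{Av}_n(123,132^{\star})$ bijectively onto $\mathrm{Av}_n(132,123^{\star})$. In particular $|\mathrm{Av}_n(123,132^{\star})|=|\mathrm{Av}_n(132,123^{\star})|$.
   Context: For $w=w_1\cdots w_{m}\in S_{m}$ and $1\le i\le m+1$, let $w^i$ be obtained by inserting $m+1$ immediately before $w_i$ (at the end if $i=m+1$); site $i$ is active with respect to a pattern $y$ if $w^i$ avoids $y$. For $x\in S_n$, $\mathrm{small}_k(x)$ is the subsequence of entries $1,\dots,k$, and $\mathrm{Act}_j(x;y)$ is the set of active sites of $\mathrm{small}_{n+1-j}(x)$ with respect to $y$. The signature of $x$ with respect to $y$ is the word $\mathfrak{S}(x;y)=|\mathrm{Act}_1(x;y)|\cdots|\mathrm{Act}_{n-1}(x;y)|$. West proved that a permutation in $\mathrm{Av}_n(123)$ (resp. $\mathrm{Av}_n(132)$) is uniquely determined by its signature with respect to $123$ (resp. $132$), and that $\{\mathfrak{S}(x;123):x\in\mathrm{Av}_n(123)\}=\{\mathfrak{S}(x;132):x\in\mathrm{Av}_n(132)\}$; West's bijection sends $x\in\mathrm{Av}_n(123)$ to the unique $x'\in\mathrm{Av}_n(132)$ with $\mathfrak{S}(x';132)=\mathfrak{S}(x;123)$. $\mathrm{Av}_n(\cdot)$ denotes the set of permutations in $S_n$ avoiding the listed patterns. An occurrence of $132^{\star}$ in $x$ is a pair of indices $a<b<n$ with $x_a<x_{b+1}$ and $x_b=x_{b+1}+1$;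 an occurrence of $123^{\star}$ is a pair $a<b<n$ with $x_a<x_b$ and $x_{b+1}=x_b+1$. *)

(* Defs.v *)
(* Permutations of [n] are represented as sequences of naturals
   that are rearrangements of 1..n (one-line notation, 1-based values). *)
From mathcomp Require Import all_boot.
Set Implicit Arguments. Unset Strict Implicit. Unset Printing Implicit Defensive.

Definition is_perm (n : nat) (x : seq nat) : bool := perm_eq x (iota 1 n).

Fixpoint subseqs (s : seq nat) : seq (seq nat) :=
  if s is a :: s' then [seq a :: t | t <- subseqs s'] ++ subseqs s' else [:: [::]].

Definition order_iso (s y : seq nat) : bool :=
  (size s == size y) &&
  all (fun i => all (fun j => (nth 0 s i < nth 0 s j) == (nth 0 y i < nth 0 y j))
                    (iota 0 (size y)))
      (iota 0 (size y)).

Definition contains (y x : seq nat) : bool := has (fun s => order_iso s y) (subseqs x).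
Definition avoids (y x : seq nat) : bool := ~~ contains y x.

Definition p123 : seq nat := [:: 1; 2; 3].
Definition p132 : seq nat := [:: 1; 3; 2].

(* w^i : insert m+1 (m = size w) immediately before w_i (1-based i), at the end if i = m+1 *)
Definition insert_max (w : seq nat) (i : nat) : seq nat :=
  take i.-1 w ++ (size w).+1 :: drop i.-1 w.

Definition num_active (y w : seq nat) : nat :=
  count (fun i => avoids y (insert_max w i)) (iota 1 (size w).+1).

Definition small (k : nat) (x : seq nat) : seq nat := filter (fun v => v <= k) x.

Definition signature (n : nat) (y x : seq nat) : seq nat :=
  [seq num_active y (small (n.+1 - j) x) | j <- iota 1 n.-1].

(* West's bijection Av_n(123) -> Av_n(132): x |-> the (unique) x' in Av_n(132)
   with S(x';132) = S(x;123)  (default x if none exists, which West's theorem excludes) *)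
Definition west (n : nat) (x : seq nat) : seq nat :=
  head x [seq x' <- permutations (iota 1 n) |
            avoids p132 x' && (signature n p132 x' == signature n p123 x)].

(* occurrences of 132-star and 123-star (1-based indices a < b < n in the paper;
   here 0-based positions a < b with b+1 < n) *)
Definition contains132star (x : seq nat) : bool :=
  let n := size x in
  has (fun a => has (fun b =>
        [&& a < b, b.+1 < n, nth 0 x a < nth 0 x b.+1 & nth 0 x b == (nth 0 x b.+1).+1])
      (iota 0 n)) (iota 0 n).
Definition contains123star (x : seq nat) : bool :=
  let n := size x in
  has (fun a => has (fun b =>
        [&& a < b, b.+1 < n, nth 0 x a < nth 0 x b & nth 0 x b.+1 == (nth 0 x b).+1])
      (iota 0 n)) (iota 0 n).

Definition inA (n : nat) (x : seq nat) : bool :=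
  [&& is_perm n x, avoids p123 x & ~~ contains132star x].
Definition inB (n : nat) (x : seq nat) : bool :=
  [&& is_perm n x, avoids p132 x & ~~ contains123star x].

(* Main.v *)
Require Import Defs.
From mathcomp Require Import all_boot zify.
Set Implicit Arguments. Unset Strict Implicit. Unset Printing Implicit Defensive.

Fixpoint hasp (g : nat -> nat -> bool) (s : seq nat) : bool :=
  if s is a :: s' then has (g a) s' || hasp g s' else false.
Fixpoint hast (h : nat -> nat -> nat -> bool) (s : seq nat) : bool :=
  if s is a :: s' then hasp (h a) s' || hast h s' else false.

Lemma subseqs_cons a s : subseqs (a :: s) = [seq a :: t | t <- subseqs s] ++ subseqs s.
Proof. by []. Qed.

Lemma has_subseqs0 (R : seq nat -> bool) s :
  (forall t, size t != 0 -> R t = false) ->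
  has R (subseqs s) = R [::].
Proof.
move=> HR; elim: s => [|a s IH] /=; first by rewrite orbF.
rewrite has_cat has_map IH (@eq_has _ _ pred0) ?has_pred0 // => t /=.
by rewrite HR.
Qed.

Lemma has_subseqs1 (R : seq nat -> bool) s :
  (forall t, size t != 1 -> R t = false) ->
  has R (subseqs s) = has (fun c => R [:: c]) s.
Proof.
move=> HR; elim: s => [|a s IH] /=; first by rewrite HR.
rewrite has_cat has_map IH; congr orb.
rewrite has_subseqs0 // => t Ht; apply: HR => /=; by case: t Ht.
Qed.

Lemma has_subseqs2 (R : seq nat -> bool) s :
  (forall t, size t != 2 -> R t = false) ->
  has R (subseqs s) = hasp (fun b c => R [:: b; c]) s.
Proof.
move=> HR; elim: s => [|a s IH] /=; first by rewrite HR.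
rewrite has_cat has_map IH; congr orb.
rewrite has_subseqs1 //= => t Ht; apply: HR => /=; by case: t Ht => [|? []].
Qed.

Lemma has_subseqs3 (R : seq nat -> bool) s :
  (forall t, size t != 3 -> R t = false) ->
  has R (subseqs s) = hast (fun a b c => R [:: a; b; c]) s.
Proof.
move=> HR; elim: s => [|a s IH] /=; first by rewrite HR.
rewrite has_cat has_map IH; congr orb.
rewrite has_subseqs2 //= => t Ht; apply: HR => /=; by case: t Ht => [|? [|? []]].
Qed.

Lemma haspP (g : nat -> nat -> bool) s : reflect (exists i j, [/\ i < j, j < size s & g (nth 0 s i) (nth 0 s j)]) (hasp g s).
Proof.
elim: s => [|a s IH] /=; first by constructor => -[i [j []]].
apply: (iffP orP).
- case=> [/(has_nthP 0) [j Hj Hg]|/IH [i [j [Hij Hj Hg]]]].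
  + by exists 0, j.+1.
  + by exists i.+1, j.+1.
- case=> [[|i] [[|j] []]] //= Hij Hj Hg.
  + by left; apply/(has_nthP 0); exists j.
  + by right; apply/IH; exists i, j.
Qed.

Lemma hastP (h : nat -> nat -> nat -> bool) s : reflect (exists i j l, [/\ i < j, j < l, l < size s & h (nth 0 s i) (nth 0 s j) (nth 0 s l)]) (hast h s).
Proof.
elim: s => [|a s IH] /=; first by constructor => -[i [j [l []]]].
apply: (iffP orP).
- case=> [/haspP [j [l [Hjl Hl Hg]]]|/IH [i [j [l [Hij Hjl Hl Hg]]]]].
  + by exists 0, j.+1, l.+1.
  + by exists i.+1, j.+1, l.+1.
- case=> [[|i] [[|j] [[|l] []]]] //= Hij Hjl Hl Hg.
  + by left; apply/haspP; exists j, l.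
  + by right; apply/IH; exists i, j, l.
Qed.

Definition T123 (s : seq nat) := exists i j l, [/\ i < j, j < l, l < size s & nth 0 s i < nth 0 s j < nth 0 s l].
Definition T132 (s : seq nat) := exists i j l, [/\ i < j, j < l, l < size s & nth 0 s i < nth 0 s l < nth 0 s j].

Lemma iso123 a b c : order_iso [:: a; b; c] p123 = (a < b < c).
Proof.
rewrite /order_iso /= !ltnn /=.
by case: (ltngtP a b); case: (ltngtP b c); case: (ltngtP a c) => //; lia.
Qed.

Lemma iso132 a b c : order_iso [:: a; b; c] p132 = (a < c < b).
Proof.
rewrite /order_iso /= !ltnn /=.
by case: (ltngtP a b); case: (ltngtP b c); case: (ltngtP a c) => //; lia.
Qed.

Lemma avoids123P s : avoids p123 s <-> ~ T123 s.
Proof.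
rewrite /avoids /contains has_subseqs3; last by move=> t /negbTE; rewrite /order_iso => ->.
split.
- move=> /hastP H [i [j [l [H1 H2 H3 H4]]]]; apply: H; exists i, j, l; split => //.
  by rewrite iso123.
- move=> H; apply/hastP => -[i [j [l [H1 H2 H3 H4]]]]; apply: H; exists i, j, l; split => //.
  by rewrite -iso123.
Qed.

Lemma avoids132P s : avoids p132 s <-> ~ T132 s.
Proof.
rewrite /avoids /contains has_subseqs3; last by move=> t /negbTE; rewrite /order_iso => ->.
split.
- move=> /hastP H [i [j [l [H1 H2 H3 H4]]]]; apply: H; exists i, j, l; split => //.
  by rewrite iso132.
- move=> H; apply/hastP => -[i [j [l [H1 H2 H3 H4]]]]; apply: H; exists i, j, l; split => //.
  by rewrite -iso132.
Qed.

Definition ins (w : seq nat) k := take k w ++ (size w).+1 :: drop k w.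
Definition bnd (w : seq nat) := forall p, nth 0 w p <= size w.
Definition up k p := if k <= p then p.+1 else p.
Definition dn k p := if k < p then p.-1 else p.

Lemma up_lt k i j : i < j -> up k i < up k j.
Proof. move=> H; rewrite /up; case: (leqP k i) => ?; case: (leqP k j) => ?; lia. Qed.
Lemma up_bnd k p m : p < m -> up k p < m.+1.
Proof. move=> H; rewrite /up; case: (leqP k p) => ?; lia. Qed.
Lemma dn_lt k i j : i < j -> i != k -> j != k -> dn k i < dn k j.
Proof. move=> H H1 H2; rewrite /dn; case: (ltnP k i) => ?; case: (ltnP k j) => ?; lia. Qed.
Lemma dn_bnd k p m : k <= m -> p < m.+1 -> p != k -> dn k p < m.
Proof. move=> H H1 H2; rewrite /dn; case: (ltnP k p) => ?; lia. Qed.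

Lemma size_ins w k : size (ins w k) = (size w).+1.
Proof. rewrite /ins size_cat /= size_take size_drop; case: ifP; lia. Qed.

Lemma nth_ins w k p : k <= size w ->
  nth 0 (ins w k) p = if p < k then nth 0 w p else if p == k then (size w).+1 else nth 0 w p.-1.
Proof.
move=> kw; rewrite /ins nth_cat size_takel //.
case: ltnP => pk; first by rewrite nth_take.
case: eqVneq => [->|pk']; first by rewrite subnn.
have -> : p - k = (p - k).-1.+1 by lia.
by rewrite /= nth_drop; congr nth; lia.
Qed.

Lemma nth_ins_k w k : k <= size w -> nth 0 (ins w k) k = (size w).+1.
Proof. by move=> kw; rewrite nth_ins // ltnn eqxx. Qed.

Lemma nth_ins_up w k p : k <= size w -> nth 0 (ins w k) (up k p) = nth 0 w p.
Proof.
move=> kw; rewrite nth_ins // /up; case: (leqP k p) => H.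
- rewrite ifN; [rewrite ifN|]; by [|lia].
- by rewrite H.
Qed.

Lemma nth_ins_dn w k p : k <= size w -> p != k -> nth 0 (ins w k) p = nth 0 w (dn k p).
Proof.
move=> kw pk; rewrite nth_ins // /dn; case: (ltnP k p) => H.
- by rewrite ifN; [rewrite ifN|]; lia.
- have pk' : p < k by rewrite ltn_neqAle pk.
  by rewrite pk'.
Qed.

Lemma bnd_ins w k : k <= size w -> bnd w -> bnd (ins w k).
Proof.
move=> kw bw p; rewrite size_ins nth_ins //.
case: ifP => _; first by apply: leqW.
by case: ifP => _ //; apply: leqW.
Qed.

Lemma av123_ins w k : k <= size w -> bnd w ->
  (~ T123 (ins w k) <-> ~ T123 w /\ (forall i j, i < j -> j < k -> nth 0 w j <= nth 0 w i)).
Proof.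
move=> kw bw; have bx := bnd_ins kw bw; split.
- move=> Hx; split.
  + move=> [i [j [l [ij jl ls /andP[v1 v2]]]]]; apply: Hx.
    exists (up k i), (up k j), (up k l); rewrite !nth_ins_up // size_ins.
    by split; [exact: up_lt|exact: up_lt|exact: up_bnd|rewrite v1 v2].
  + move=> i j ij jk; rewrite leqNgt; apply/negP => v; apply: Hx.
    exists i, j, k; rewrite !nth_ins // ij jk ltnn eqxx (ltn_trans ij jk) size_ins.
    split => //.
    by rewrite v /=; have := bw j; lia.
- move=> [Hw HD] [i [j [l [ij jl ls /andP[v1 v2]]]]]; rewrite size_ins in ls.
  case: (eqVneq l k) => [lk|lk].
  + subst l; move: v1; rewrite !nth_ins // jl (ltn_trans ij jl) => v1.
    have := HD i j ij jl; lia.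
  case: (eqVneq j k) => [jk|jk].
  + subst j; rewrite nth_ins_k // in v2; have := bx l; rewrite size_ins; lia.
  case: (eqVneq i k) => [ik|ik].
  + subst i; rewrite nth_ins_k // in v1; have := bx j; rewrite size_ins; lia.
  rewrite !(nth_ins_dn kw) // in v1 v2; apply: Hw.
  exists (dn k i), (dn k j), (dn k l).
  by split; [exact: dn_lt|exact: dn_lt|exact: dn_bnd|rewrite v1 v2].
Qed.

Lemma av132_ins w k : k <= size w -> bnd w ->
  (~ T132 (ins w k) <-> ~ T132 w /\ (forall i j, i < k -> k <= j -> j < size w -> nth 0 w j <= nth 0 w i)).
Proof.
move=> kw bw; have bx := bnd_ins kw bw; split.
- move=> Hx; split.
  + move=> [i [j [l [ij jl ls /andP[v1 v2]]]]]; apply: Hx.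
    exists (up k i), (up k j), (up k l); rewrite !nth_ins_up // size_ins.
    by split; [exact: up_lt|exact: up_lt|exact: up_bnd|rewrite v1 v2].
  + move=> i j ik kj jm; rewrite leqNgt; apply/negP => v; apply: Hx.
    exists i, k, (up k j); rewrite nth_ins_up // !nth_ins // ik ltnn eqxx size_ins.
    split => //; first by rewrite /up kj.
    * exact: up_bnd.
    * by rewrite v /=; have := bw j; lia.
- move=> [Hw HD] [i [j [l [ij jl ls /andP[v1 v2]]]]]; rewrite size_ins in ls.
  case: (eqVneq j k) => [jk|jk].
  + subst j.
    have xi : nth 0 (ins w k) i = nth 0 w i by rewrite nth_ins // ij.
    have xl : nth 0 (ins w k) l = nth 0 w l.-1 by rewrite nth_ins // ltnNge (ltnW jl) /= gtn_eqF.
    rewrite xi xl in v1; have := HD i l.-1 ij ltac:(lia) ltac:(lia); lia.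
  case: (eqVneq l k) => [lk|lk].
  + subst l; rewrite nth_ins_k // in v2; have := bx j; rewrite size_ins; lia.
  case: (eqVneq i k) => [ik|ik].
  + subst i; rewrite nth_ins_k // in v1; have := bx l; rewrite size_ins; lia.
  rewrite !(nth_ins_dn kw) // in v1 v2; apply: Hw.
  exists (dn k i), (dn k j), (dn k l).
  by split; [exact: dn_lt|exact: dn_lt|exact: dn_bnd|rewrite v1 v2].
Qed.

Lemma na_act y w : num_active y w = count (fun k => avoids y (ins w k)) (iota 0 (size w).+1).
Proof.
rewrite /num_active -[1]addn0 iotaDl count_map; apply: eq_count => k /=.
by rewrite add1n.
Qed.

Definition D (s : seq nat) j := forall i i', i < i' -> i' < j -> nth 0 s i' <= nth 0 s i.
Definition C (s : seq nat) j := forall i i', i < j -> j <= i' -> i' < size s -> nth 0 s i' <= nth 0 s i.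

Lemma act123P s j : j <= size s -> bnd s -> ~ T123 s -> reflect (D s j) (avoids p123 (ins s j)).
Proof.
move=> js bs Ts; apply: (iffP idP).
- by move=> /avoids123P /(av123_ins js bs) [].
- by move=> H; apply/avoids123P/(av123_ins js bs).
Qed.

Lemma act132P s j : j <= size s -> bnd s -> ~ T132 s -> reflect (C s j) (avoids p132 (ins s j)).
Proof.
move=> js bs Ts; apply: (iffP idP).
- by move=> /avoids132P /(av132_ins js bs) [].
- by move=> H; apply/avoids132P/(av132_ins js bs).
Qed.

Lemma count_lt b n : count (fun j => j < b) (iota 0 n) = minn b n.
Proof.
elim: n => [|n IH]; first by rewrite minn0.
rewrite -addn1 iotaD count_cat IH /= add0n; case: (ltnP n b) => ? /=; lia.
Qed.

Lemma filter_down (P : pred nat) N : (forall i j, i <= j -> j < N -> P j -> P i) ->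
  filter P (iota 0 N) = iota 0 (count P (iota 0 N)).
Proof.
elim: N => [|N IH] H //.
have IH' := IH (fun i j ij jN => H i j ij (ltnW jN)).
rewrite -addn1 iotaD filter_cat count_cat IH' /= add0n.
case PN: (P N) => /=; last by rewrite cats0 !addn0.
have -> : count P (iota 0 N) = N.
  rewrite (eq_in_count (a2 := predT)) ?count_predT ?size_iota //.
  move=> i; rewrite mem_iota add0n => /andP[_ iN]; apply: (H i N) => //; exact: ltnW.
by rewrite -[in RHS]addn1 iotaD.
Qed.

Lemma act123_ins w k j : k <= size w -> bnd w -> ~ T123 w -> avoids p123 (ins w k) ->
  j <= (size w).+1 ->
  avoids p123 (ins (ins w k) j) = (j <= k) || ((k == 0) && avoids p123 (ins w j.-1)).
Proof.
move=> kw bw Tw ak jx.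
have bx := bnd_ins kw bw.
have Tx : ~ T123 (ins w k) by apply/avoids123P.
have Dk : D w k by apply/(act123P kw bw Tw).
apply/(act123P _ bx Tx)/idP; first by rewrite size_ins.
- move=> Dx; case: (leqP j k) => [//|kj] /=.
  case: (eqVneq k 0) => [k0|k0] /=.
  + subst k; apply/(act123P _ bw Tw); first lia.
    move=> i i' ii' i'j; have := Dx i.+1 i'.+1 ltac:(lia) ltac:(lia).
    by rewrite !nth_ins.
  + exfalso; have := Dx 0 k ltac:(lia) kj.
    rewrite nth_ins_k // nth_ins //.
    have -> : 0 < k by lia.
    by have := bw 0; lia.
- move=> /orP [jk | /andP [/eqP k0 aw]].
  + move=> i i' ii' i'j; rewrite !nth_ins //.
    have ik : i < k by lia.
    have i'k : i' < k by lia.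
    by rewrite ik i'k; apply: Dk.
  + subst k; have Dw : D w j.-1 by apply/(act123P _ bw Tw) => //; lia.
    move=> i i' ii' i'j.
    case: i ii' => [|i] ii'.
    * by rewrite nth_ins_k //; have := bx i'; rewrite size_ins.
    * case: i' ii' i'j => [|i'] ii' i'j //.
      rewrite !nth_ins //=; apply: Dw; lia.
Qed.

Lemma na123_ins w k : k <= size w -> bnd w -> ~ T123 w -> avoids p123 (ins w k) ->
  num_active p123 (ins w k) = if k == 0 then (num_active p123 w).+1 else k.+1.
Proof.
move=> kw bw Tw ak; rewrite na_act size_ins.
rewrite (eq_in_count (a2 := fun j => (j <= k) || ((k == 0) && avoids p123 (ins w j.-1)))); last first.
  move=> j; rewrite mem_iota add0n => /andP [_ jl]; apply: act123_ins => //.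
case: eqVneq => [k0|k0].
- subst k; rewrite na_act.
  have -> : iota 0 (size w).+2 = 0 :: [seq 1 + i | i <- iota 0 (size w).+1] by rewrite -(iotaDl 1 0).
  rewrite /= count_map add1n; congr S.
- rewrite (eq_count (a2 := fun j => j < k.+1)); last by move=> j /=; rewrite orbF.
  rewrite count_lt; lia.
Qed.

Lemma act132_ins w k j : k <= size w -> bnd w -> ~ T132 w -> avoids p132 (ins w k) ->
  j <= (size w).+1 ->
  avoids p132 (ins (ins w k) j) = (j == 0) || ((k < j) && avoids p132 (ins w j.-1)).
Proof.
move=> kw bw Tw ak jx.
have bx := bnd_ins kw bw.
have Tx : ~ T132 (ins w k) by apply/avoids132P.
have Ck : C w k by apply/(act132P kw bw Tw).
apply/(act132P _ bx Tx)/idP; first by rewrite size_ins.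
- move=> Cx; case: (eqVneq j 0) => [//|j0] /=.
  case: (leqP j k) => [jk|kj] /=.
  + exfalso; have := Cx 0 k ltac:(lia) jk; rewrite size_ins => /(_ ltac:(lia)).
    rewrite nth_ins_k // nth_ins //.
    have -> : 0 < k by lia.
    by have := bw 0; lia.
  + apply/(act132P _ bw Tw); first lia.
    move=> i i' ij ji' i'm.
    have := Cx (up k i) (up k i'); rewrite !nth_ins_up // size_ins; apply; rewrite /up.
    * by case: (leqP k i) => ? ; lia.
    * by case: (leqP k i') => ? ; lia.
    * by case: (leqP k i') => ? ; lia.
- move=> /orP [/eqP j0 | /andP [kj aw]]; first by subst j.
  have Cw : C w j.-1 by apply/(act132P _ bw Tw) => //; lia.
  move=> i i' ij ji'; rewrite size_ins => i'm.
  have i'k : i' != k by lia.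
  case: (eqVneq i k) => [ik|ik].
  + by subst i; rewrite nth_ins_k //; have := bx i'; rewrite size_ins.
  rewrite !(nth_ins_dn kw) //; apply: Cw; rewrite /dn.
  * by case: (ltnP k i) => ?; lia.
  * by case: (ltnP k i') => ?; lia.
  * by case: (ltnP k i') => ?; lia.
Qed.

Lemma na132_ins w k : k <= size w -> bnd w -> ~ T132 w -> avoids p132 (ins w k) ->
  num_active p132 (ins w k) = (count (fun j => avoids p132 (ins w j)) (iota k ((size w).+1 - k))).+1.
Proof.
move=> kw bw Tw ak; rewrite na_act size_ins.
rewrite (eq_in_count (a2 := fun j => (j == 0) || ((k < j) && avoids p132 (ins w j.-1)))); last first.
  move=> j; rewrite mem_iota add0n => /andP [_ jl]; apply: act132_ins => //.
have -> : iota 0 (size w).+2 = 0 :: [seq 1 + i | i <- iota 0 k ++ iota k ((size w).+1 - k)].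
  by rewrite -iotaD (subnKC (leqW kw)) -(iotaDl 1 0).
rewrite /= count_map count_cat add1n; congr S.
rewrite (eq_in_count (a1 := preim _ _) (a2 := pred0)); last first.
  by move=> j; rewrite mem_iota add0n /= add1n => jk; rewrite ltnNge jk.
rewrite count_pred0 add0n.
apply: eq_in_count => j; rewrite mem_iota => /andP [kj _] /=.
by rewrite add1n ltnS kj.
Qed.

Lemma count_rev_iota (P : pred nat) b N :
  map (fun s => count P (iota s (b + N - s))) (filter P (iota b N)) = rev (iota 1 (count P (iota b N))).
Proof.
elim: N b => [|N IH] b //=.
have E : (fun s => count P (iota s (b + N.+1 - s))) = (fun s => count P (iota s (b.+1 + N - s))).
  by rewrite addSnnS.
case Pb: (P b) => /=; rewrite E IH //.
rewrite addnS subSn ?leq_addr // addKn /= Pb add1n.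
by rewrite add0n -/(iota 1 _.+1) -(addn1 (count _ _)) iotaD rev_cat /= addnC.
Qed.

Lemma act0_123 w : bnd w -> ~ T123 w -> avoids p123 (ins w 0).
Proof. by move=> bw Tw; apply/(act123P _ bw Tw) => // i i' _ /=. Qed.

Lemma act0_132 w : bnd w -> ~ T132 w -> avoids p132 (ins w 0).
Proof. by move=> bw Tw; apply/(act132P _ bw Tw) => // i i'. Qed.

Lemma filter123 w : bnd w -> ~ T123 w ->
  filter (fun k => avoids p123 (ins w k)) (iota 0 (size w).+1) = iota 0 (num_active p123 w).
Proof.
move=> bw Tw; rewrite na_act; apply: filter_down => i j ij jm /(act123P _ bw Tw) Dj.
apply/(act123P _ bw Tw); first lia.
by move=> a b ab bi; apply: Dj; lia.
Qed.

Lemma eq_in_map' (f g : nat -> nat) s : {in s, f =1 g} -> map f s = map g s.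
Proof. by move/eq_in_map. Qed.

Lemma map_S_iota a n : [seq i.+1 | i <- iota a n] = iota a.+1 n.
Proof. by rewrite -addn1 addnC iotaDl; apply: eq_map => i; rewrite add1n. Qed.

Lemma P2_123 w : bnd w -> ~ T123 w ->
  perm_eq (map (fun k => num_active p123 (ins w k)) (filter (fun k => avoids p123 (ins w k)) (iota 0 (size w).+1)))
          (iota 2 (num_active p123 w)).
Proof.
move=> bw Tw; have Hf := filter123 bw Tw.
have L0 : 0 \in iota 0 (num_active p123 w).
  by rewrite -Hf mem_filter act0_123 // mem_iota.
rewrite Hf.
rewrite (@eq_in_map' _ ( fun k => if k == 0 then (num_active p123 w).+1 else k.+1)); last first.
  move=> k kL; apply: na123_ins => //.
    by move: kL; rewrite -Hf mem_filter mem_iota => /andP [_ /andP [_]]; rewrite add0n ltnS.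
  by move: kL; rewrite -Hf mem_filter => /andP [].
move: L0; case: (num_active p123 w) => [|L] //= _.
rewrite (@eq_in_map' _ ( fun k => k.+1)); last first.
  by move=> k; rewrite mem_iota => /andP [k1 _]; rewrite gtn_eqF.
rewrite map_S_iota -/(iota 2 L.+1).
have -> : iota 2 L.+1 = rcons (iota 2 L) L.+2 by rewrite -cats1 -[L.+1]addn1 iotaD /= add2n addn1.
by rewrite perm_sym perm_rcons.
Qed.

Lemma P2_132 w : bnd w -> ~ T132 w ->
  perm_eq (map (fun k => num_active p132 (ins w k)) (filter (fun k => avoids p132 (ins w k)) (iota 0 (size w).+1)))
          (iota 2 (num_active p132 w)).
Proof.
move=> bw Tw.
rewrite (@eq_in_map' _ ( fun k => (count (fun j => avoids p132 (ins w j)) (iota k ((size w).+1 - k))).+1)); last first.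
  move=> k; rewrite mem_filter mem_iota => /andP [ak /andP [_ km]].
  by apply: na132_ins => //; rewrite -ltnS.
have := count_rev_iota (fun j => avoids p132 (ins w j)) 0 (size w).+1.
rewrite add0n => E.
rewrite (map_comp S) E map_rev map_S_iota na_act.
by rewrite perm_rev.
Qed.

Lemma perm_size' n x : is_perm n x -> size x = n.
Proof. by move=> /perm_size ->; rewrite size_iota. Qed.

Lemma perm_mem' n x v : is_perm n x -> (v \in x) = (0 < v <= n).
Proof. by move=> /perm_mem ->; rewrite mem_iota add1n ltnS. Qed.

Lemma perm_uniq' n x : is_perm n x -> uniq x.
Proof. by move=> /perm_uniq ->; apply: iota_uniq. Qed.

Lemma perm_bnd n x : is_perm n x -> bnd x.
Proof.
move=> px p; case: (ltnP p (size x)) => pl.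
- have := mem_nth 0 pl; rewrite (perm_mem' _ px) (perm_size' px) => /andP [_ ->] //.
- by rewrite nth_default.
Qed.

Lemma ins_cat u v : ins (u ++ v) (size u) = u ++ (size (u ++ v)).+1 :: v.
Proof. by rewrite /ins take_size_cat // drop_size_cat. Qed.

Lemma perm_ins n w k : is_perm n w -> is_perm n.+1 (ins w k).
Proof.
move=> pw; rewrite /is_perm /ins (perm_size' pw) -cat1s perm_catCA cat1s cat_take_drop.
have -> : iota 1 n.+1 = rcons (iota 1 n) n.+1 by rewrite -cats1 -[n.+1]addn1 iotaD /= add1n addn1.
by rewrite perm_sym perm_rcons perm_cons perm_sym.
Qed.

Lemma small_id n x : is_perm n x -> small n x = x.
Proof.
move=> px; apply/all_filterP/allP => v; rewrite (perm_mem' _ px) => /andP [_ ->] //.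
Qed.

Lemma small_ins n w k j : is_perm n w -> j <= n -> small j (ins w k) = small j w.
Proof.
move=> pw jn; rewrite /small /ins filter_cat /= (perm_size' pw).
have -> : (n.+1 <= j) = false by apply/negbTE; rewrite -ltnNge ltnS.
by rewrite -filter_cat cat_take_drop.
Qed.

Lemma small_small j n x : j <= n -> small j (small n x) = small j x.
Proof.
move=> jn; rewrite /small -filter_predI; apply: eq_filter => v /=.
by case: (leqP v j) => //= vj; apply: leq_trans jn.
Qed.

Lemma perm_small n j x : is_perm n x -> j <= n -> is_perm j (small j x).
Proof.
move=> px jn; rewrite /is_perm /small.
have -> : iota 1 j = filter (fun v => v <= j) (iota 1 n).
  rewrite -(subnKC jn) iotaD filter_cat.
  rewrite (eq_in_filter (a2 := predT)) ?filter_predT; last first.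
    by move=> v; rewrite mem_iota add1n ltnS => /andP [].
  rewrite (eq_in_filter (a2 := pred0)) ?filter_pred0 ?cats0 //.
  by move=> v; rewrite mem_iota => /andP [jv _] /=; rewrite leqNgt -add1n jv.
exact: perm_filter.
Qed.

Lemma perm_dec n x : is_perm n.+1 x ->
  exists2 k, k <= n & x = ins (small n x) k.
Proof.
move=> px; have mx : n.+1 \in x by rewrite (perm_mem' _ px) /=.
have ux := perm_uniq' px.
move: px ux; case/splitPr: mx => u v px ux.
have sx := perm_size' px; rewrite size_cat /= in sx.
move: ux; rewrite cat_uniq /= => /and4P [_ /norP [Hu _] Hv _].
have ok : forall v', v' \in u ++ n.+1 :: v -> v' != n.+1 -> v' <= n.
  by move=> v'; rewrite (perm_mem' _ px) => /andP [_ H1] H2; rewrite -ltnS ltn_neqAle H2 H1.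
have Hs : small n (u ++ n.+1 :: v) = u ++ v.
  rewrite /small filter_cat /= ltnn.
  rewrite (eq_in_filter (s := u) (a2 := predT)) ?filter_predT; last first.
    move=> y vt /=; apply: ok; first by rewrite mem_cat vt.
    by apply/eqP => E; move: Hu; rewrite -E vt.
  rewrite (eq_in_filter (s := v) (a2 := predT)) ?filter_predT //.
  move=> y vt /=; apply: ok; first by rewrite mem_cat in_cons vt !orbT.
  by apply/eqP => E; move: Hv; rewrite -E vt.
exists (size u); first by rewrite -ltnS -sx addnS ltnS leq_addr.
by rewrite Hs ins_cat size_cat; congr (_ ++ _ :: _); lia.
Qed.

Definition S132 (x : seq nat) := exists a b, [/\ a < b, b.+1 < size x, nth 0 x a < nth 0 x b.+1 & nth 0 x b = (nth 0 x b.+1).+1].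
Definition S123 (x : seq nat) := exists a b, [/\ a < b, b.+1 < size x, nth 0 x a < nth 0 x b & nth 0 x b.+1 = (nth 0 x b).+1].

Lemma star132P x : reflect (S132 x) (contains132star x).
Proof.
rewrite /contains132star; apply: (iffP hasP).
- move=> [a _ /hasP [b _ /and4P [ab bs v /eqP e]]]; by exists a, b.
- move=> [a [b [ab bs v e]]]; exists a; first by rewrite mem_iota /=; lia.
  apply/hasP; exists b; first by rewrite mem_iota /=; lia.
  by rewrite ab bs v e eqxx.
Qed.

Lemma star123P x : reflect (S123 x) (contains123star x).
Proof.
rewrite /contains123star; apply: (iffP hasP).
- move=> [a _ /hasP [b _ /and4P [ab bs v /eqP e]]]; by exists a, b.
- move=> [a [b [ab bs v e]]]; exists a; first by rewrite mem_iota /=; lia.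
  apply/hasP; exists b; first by rewrite mem_iota /=; lia.
  by rewrite ab bs v e eqxx.
Qed.

Lemma nth_ins_lt w k p : k <= size w -> p < k -> nth 0 (ins w k) p = nth 0 w p.
Proof. by move=> kw pk; rewrite nth_ins // pk. Qed.

Lemma nth_ins_gt w k p : k <= size w -> k < p -> nth 0 (ins w k) p = nth 0 w p.-1.
Proof. by move=> kw pk; rewrite nth_ins // ltnNge (ltnW pk) /= gtn_eqF. Qed.

Lemma up_S k b : k != b.+1 -> (up k b).+1 = up k b.+1.
Proof. by rewrite /up => H; case: (leqP k b) => ?; case: (leqP k b.+1) => ?; lia. Qed.

Lemma star132_ins w k : k <= size w -> bnd w -> D w k ->
  (S132 (ins w k) <-> S132 w \/ [/\ k < size w, nth 0 w k = size w & exists2 a, a < k & nth 0 w a < size w]).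
Proof.
move=> kw bw Dk; have bx := bnd_ins kw bw; split.
- move=> [a [b [ab bs v e]]]; rewrite size_ins in bs.
  case: (eqVneq b k) => [bk|bk].
  + subst b; right; rewrite nth_ins_k // (nth_ins_lt kw ab) (nth_ins_gt kw (ltnSn k)) /= in v e.
    split; [lia| by case: e => ->|exists a => //; by move: e v => [<-]].
  case: (eqVneq b.+1 k) => [bk'|bk'].
  + by rewrite bk' nth_ins_k // in e; have := bx b; rewrite e size_ins; lia.
  case: (ltnP b.+1 k) => bk''.
  + left; exists a, b; rewrite !nth_ins // ?bk'' ?(ltn_trans ab) ?(ltn_trans _ bk'') // in v e.
    by split => //; lia.
  case: (eqVneq a k) => [ak|ak].
  + by subst a; rewrite nth_ins_k // in v; have := bx b.+1; rewrite size_ins; lia.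
  left; rewrite !(nth_ins_dn kw) // in v e.
  exists (dn k a), (dn k b); move: v e; rewrite /dn.
  have -> : k < b by lia.
  have -> : k < b.+1 by lia.
  have b0 : 0 < b by lia.
  by rewrite (prednK b0); case: (ltnP k a) => ? /= v e; split => //; lia.
- move=> [[a [b [ab bs v e]]] | [km wk [a ak wa]]].
  + case: (eqVneq k b.+1) => [kb|kb].
    * have := Dk a b ab ltac:(lia); lia.
    * exists (up k a), (up k b); rewrite (up_S kb) !nth_ins_up // size_ins.
      by split => //; [exact: up_lt|exact: up_bnd].
  + exists a, k; rewrite size_ins nth_ins_k // (nth_ins_lt kw ak) (nth_ins_gt kw (ltnSn k)) /=.
    by split => //; rewrite wk.
Qed.

Lemma star123_ins w k : k <= size w -> bnd w -> C w k ->
  (S123 (ins w k) <-> S123 w \/ [/\ 0 < k, nth 0 w k.-1 = size w & exists2 a, a < k.-1 & nth 0 w a < size w]).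
Proof.
move=> kw bw Ck; have bx := bnd_ins kw bw; split.
- move=> [a [b [ab bs v e]]]; rewrite size_ins in bs.
  case: (eqVneq b k) => [bk|bk].
  + by subst b; rewrite nth_ins_k // in e; have := bx k.+1; rewrite e size_ins; lia.
  case: (eqVneq b.+1 k) => [bk'|bk'].
  + subst k; right; rewrite nth_ins_k // (nth_ins_lt kw (ltn_trans ab (ltnSn b))) (nth_ins_lt kw (ltnSn b)) /= in v e.
    split => //; [by case: e => ->|exists a => //; by move: e v => [->]].
  case: (ltnP b.+1 k) => bk''.
  + left; exists a, b; rewrite !nth_ins // ?bk'' ?(ltn_trans ab) ?(ltn_trans _ bk'') // in v e.
    by split => //; lia.
  case: (eqVneq a k) => [ak|ak].
  + by subst a; rewrite nth_ins_k // in v; have := bx b; rewrite size_ins; lia.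
  left; rewrite !(nth_ins_dn kw) // in v e.
  exists (dn k a), (dn k b); move: v e; rewrite /dn.
  have -> : k < b by lia.
  have -> : k < b.+1 by lia.
  have b0 : 0 < b by lia.
  by rewrite (prednK b0); case: (ltnP k a) => ? /= v e; split => //; lia.
- move=> [[a [b [ab bs v e]]] | [k0 wk [a ak wa]]].
  + case: (eqVneq k b.+1) => [kb|kb].
    * have := Ck b b.+1 ltac:(lia) ltac:(lia) bs; lia.
    * exists (up k a), (up k b); rewrite (up_S kb) !nth_ins_up // size_ins.
      by split => //; [exact: up_lt|exact: up_bnd].
  + exists a, k.-1; rewrite size_ins prednK // nth_ins_k // (nth_ins_lt kw (_ : a < k)) ?(nth_ins_lt kw (_ : k.-1 < k)); try lia.
    by split => //; rewrite wk.
Qed.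

Lemma nth_ins_max z k' k : k' <= size z -> bnd z -> nth 0 (ins z k') k = (size z).+1 -> k = k'.
Proof.
move=> kz bz; rewrite nth_ins //.
case: ltnP => [kk|kk]; first by have := bz k; lia.
case: eqVneq => [//|kk'].
by have := bz k.-1; lia.
Qed.

Lemma avoid123_dec n x : is_perm n.+1 x -> avoids p123 x ->
  exists2 k, k <= n & [/\ x = ins (small n x) k, avoids p123 (small n x) & D (small n x) k].
Proof.
move=> px ax; have [k kn Ex] := perm_dec px.
have pw := perm_small px (leqnSn n).
have kw : k <= size (small n x) by rewrite (perm_size' pw).
have H : avoids p123 (ins (small n x) k) by rewrite -Ex.
exists k => //; move: H => /avoids123P /(av123_ins kw (perm_bnd pw)) [H1 H2].
by split => //; apply/avoids123P.
Qed.

Lemma avoid132_dec n x : is_perm n.+1 x -> avoids p132 x ->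
  exists2 k, k <= n & [/\ x = ins (small n x) k, avoids p132 (small n x) & C (small n x) k].
Proof.
move=> px ax; have [k kn Ex] := perm_dec px.
have pw := perm_small px (leqnSn n).
have kw : k <= size (small n x) by rewrite (perm_size' pw).
have H : avoids p132 (ins (small n x) k) by rewrite -Ex.
exists k => //; move: H => /avoids132P /(av132_ins kw (perm_bnd pw)) [H1 H2].
by split => //; apply/avoids132P.
Qed.

Lemma loc123 n x : is_perm n.+2 x -> avoids p123 x ->
  contains132star x = contains132star (small n.+1 x) ||
    ((num_active p123 x == num_active p123 (small n.+1 x)) &&
     (num_active p123 (small n.+1 x) <= num_active p123 (small n x))).
Proof.
move=> px ax.
have pw := perm_small px (leqnSn n.+1).
have [k kn [Ex aw Dk]] := avoid123_dec px ax.
have [k' kn' [Ew az Dk']] := avoid123_dec pw aw.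
rewrite small_small // in Ew az Dk'.
have pz := perm_small px (leqW (leqnSn n)).
set w := small n.+1 x in pw Ex aw Dk Ew *.
set z := small n x in pz Ew az Dk' *.
have sw := perm_size' pw; have sz := perm_size' pz.
have bw := perm_bnd pw; have bz := perm_bnd pz.
have Tw : ~ T123 w by apply/avoids123P.
have Tz : ~ T123 z by apply/avoids123P.
have kw : k <= size w by rewrite sw.
have kz : k' <= size z by rewrite sz.
have ak : avoids p123 (ins w k) by rewrite -Ex.
have ak' : avoids p123 (ins z k') by rewrite -Ew.
have nx : num_active p123 x = if k == 0 then (num_active p123 w).+1 else k.+1.
  by rewrite Ex na123_ins.
have nw : num_active p123 w = if k' == 0 then (num_active p123 z).+1 else k'.+1.
  by rewrite Ew na123_ins.
have kLz : k' < num_active p123 z.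
  have := mem_iota 0 (num_active p123 z) k'.
  by rewrite -filter123 // mem_filter ak' mem_iota add0n ltnS kz /= => <-.
rewrite nx.
apply/idP/idP.
- move=> /star132P; rewrite Ex => /(star132_ins kw bw Dk) [H|[km wk [a ak0 wa]]].
  + by apply/orP; left; apply/star132P.
  apply/orP; right.
  have kk : k = k' by apply: (@nth_ins_max z k' k kz bz); rewrite -Ew wk sw sz.
  subst k'; rewrite nw; have -> : (k == 0) = false by lia.
  by rewrite eqxx /=.
- move=> /orP [/star132P H|/andP [/eqP e le]].
  + by apply/star132P; rewrite Ex; apply/(star132_ins kw bw Dk); left.
  apply/star132P; rewrite Ex; apply/(star132_ins kw bw Dk); right.
  case: (eqVneq k 0) e => [k0|k0] e; first by lia.
  move: le e; rewrite nw; case: (eqVneq k' 0) => [k'0|k'0] le e; first by lia.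
  have kk : k = k' by lia.
  subst k'; split.
  + have sw2 : @size nat w = n.+1 := sw. lia.
  + have sw2 : @size nat w = n.+1 := sw.
    have sz2 : @size nat z = n := sz.
    have := nth_ins_k kz; rewrite -Ew => ->; lia.
  + exists 0; first lia.
    have sw2 : @size nat w = n.+1 := sw.
    have sz2 : @size nat z = n := sz.
    have k0' : 0 < k by lia.
    have := nth_ins_lt kz k0'; rewrite -Ew => ->; have := bz 0; lia.
Qed.

Lemma iota_split a N : a <= N -> iota 0 N = iota 0 a ++ iota a (N - a).
Proof. by move=> aN; rewrite -{1}(subnKC aN) iotaD. Qed.

Lemma loc132 n x : is_perm n.+2 x -> avoids p132 x ->
  contains123star x = contains123star (small n.+1 x) ||
    ((num_active p132 x == num_active p132 (small n.+1 x)) &&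
     (num_active p132 (small n.+1 x) <= num_active p132 (small n x))).
Proof.
move=> px ax.
have pw := perm_small px (leqnSn n.+1).
have [k kn [Ex aw Ck]] := avoid132_dec px ax.
have [k' kn' [Ew az Ck']] := avoid132_dec pw aw.
rewrite small_small // in Ew az Ck'.
have pz := perm_small px (leqW (leqnSn n)).
set w := small n.+1 x in pw Ex aw Ck Ew *.
set z := small n x in pz Ew az Ck' *.
have sw : @size nat w = n.+1 := perm_size' pw.
have sz : @size nat z = n := perm_size' pz.
have bw := perm_bnd pw; have bz := perm_bnd pz.
have Tw : ~ T132 w by apply/avoids132P.
have Tz : ~ T132 z by apply/avoids132P.
have kw : k <= size w by rewrite sw.
have kz : k' <= size z by rewrite sz.
have ak : avoids p132 (ins w k) by rewrite -Ex.
have ak' : avoids p132 (ins z k') by rewrite -Ew.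
have Hw : forall j, j <= n.+1 -> avoids p132 (ins w j) = (j == 0) || ((k' < j) && avoids p132 (ins z j.-1)).
  by move=> j jn; rewrite Ew; apply: act132_ins => //; rewrite sz.
set aw' := fun j => avoids p132 (ins w j).
set az' := fun j => avoids p132 (ins z j).
have nx : num_active p132 x = (count aw' (iota k (n.+2 - k))).+1 by rewrite Ex na132_ins // sw.
have nw : num_active p132 w = count aw' (iota 0 k) + count aw' (iota k (n.+2 - k)).
  by rewrite na_act sw -count_cat -iota_split //; lia.
have nw' : num_active p132 w = (count az' (iota k' (n.+1 - k'))).+1 by rewrite Ew na132_ins // sz.
have nz : num_active p132 z = count az' (iota 0 k') + count az' (iota k' (n.+1 - k')).
  by rewrite na_act sz -count_cat -iota_split //; lia.
have c1 : count aw' (iota 0 k'.+1) = 1.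
  rewrite /= {1}/aw' Hw //= add1n; congr S.
  rewrite (eq_in_count (a2 := pred0)) ?count_pred0 // => j; rewrite mem_iota => /andP [j1 jk].
  by rewrite /aw' Hw /=; [rewrite gtn_eqF //; lia|lia].
have eqx : (num_active p132 x == num_active p132 w) = (count aw' (iota 0 k) == 1).
  by rewrite nx nw; apply/eqP/eqP; lia.
have lez : (num_active p132 w <= num_active p132 z) = (0 < count az' (iota 0 k')).
  by rewrite nz nw'; apply/idP/idP; lia.
have cz : (0 < count az' (iota 0 k')) = (0 < k').
  case: k' {kn' Ew Ck' kz ak' Hw nw' nz c1 lez} => [//|k''].
  by rewrite /= {1}/az' act0_132.
have cw : (count aw' (iota 0 k) == 1) = (k == k'.+1).
  case: (eqVneq k k'.+1) => [->|kk]; first by rewrite c1.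
  have := Hw k kn; rewrite -/(aw' k) {1}/aw' ak => /esym /orP [/eqP k0|/andP [kk' _]].
    by subst k.
  have -> : k = k'.+1 + (k - k'.+1) by lia.
  rewrite iotaD count_cat c1 add0n.
  have -> : k - k'.+1 = (k - k'.+1 - 1).+1 by lia.
  by rewrite /= {1}/aw' Hw //= ltnSn ak'.
rewrite eqx lez cz cw.
apply/idP/idP.
- move=> /star123P; rewrite Ex => /(star123_ins kw bw Ck) [H|[k0 wk [a ak0 wa]]].
  + by apply/orP; left; apply/star123P.
  apply/orP; right.
  have kk : k.-1 = k' by apply: (@nth_ins_max z k' k.-1 kz bz); rewrite -Ew wk sw sz.
  by apply/andP; split; [apply/eqP; lia|lia].
- move=> /orP [/star123P H|/andP [/eqP kk k0]].
  + by apply/star123P; rewrite Ex; apply/(star123_ins kw bw Ck); left.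
  apply/star123P; rewrite Ex; apply/(star123_ins kw bw Ck); right.
  subst k; split => //=.
  + by have := nth_ins_k kz; rewrite -Ew => ->; lia.
  + exists 0 => //.
    have := nth_ins_lt kz k0; rewrite -Ew => ->; have := bz 0; lia.
Qed.

Definition FL y1 y2 n (x1 x2 : seq nat) :=
  forall j, j <= n -> num_active y1 (small j x1) = num_active y2 (small j x2).

Definition GP y := forall m w, is_perm m w -> avoids y w ->
  perm_eq (map (fun k => num_active y (ins w k)) (filter (fun k => avoids y (ins w k)) (iota 0 m.+1)))
          (iota 2 (num_active y w)).
Definition AC y := forall m x, is_perm m.+1 x -> avoids y x -> avoids y (small m x).

Lemma GP123 : GP p123.
Proof.
move=> m w pw aw; rewrite -(perm_size' pw); apply: P2_123; first exact: perm_bnd pw.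
exact/avoids123P.
Qed.

Lemma GP132 : GP p132.
Proof.
move=> m w pw aw; rewrite -(perm_size' pw); apply: P2_132; first exact: perm_bnd pw.
exact/avoids132P.
Qed.

Lemma AC123 : AC p123.
Proof. by move=> m x px ax; have [k _ []] := avoid123_dec px ax. Qed.

Lemma AC132 : AC p132.
Proof. by move=> m x px ax; have [k _ []] := avoid132_dec px ax. Qed.

Lemma perm0 x : is_perm 0 x -> x = [::].
Proof. by move=> /perm_size'; case: x. Qed.

Lemma exist_corr y1 y2 : GP y1 -> GP y2 -> AC y1 -> num_active y1 [::] = num_active y2 [::] -> avoids y2 [::] ->
  forall n x, is_perm n x -> avoids y1 x -> exists x', [/\ is_perm n x', avoids y2 x' & FL y1 y2 n x x'].
Proof.
move=> G1 G2 A1 E0 A0; elim=> [|n IH] x px ax.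
- rewrite (perm0 px); exists [::]; split => //.
have [k kn Ex] := perm_dec px.
have pw := perm_small px (leqnSn n).
have aw := A1 _ _ px ax.
have [w' [pw' aw' Fw]] := IH _ pw aw.
have Lw : num_active y1 (small n x) = num_active y2 w'.
  by have := Fw n (leqnn n); rewrite !(small_id pw) (small_id pw').
have mk : num_active y1 x \in iota 2 (num_active y2 w').
  rewrite -Lw -(perm_mem (G1 _ _ pw aw)); rewrite {1}Ex.
  apply: (map_f (fun k => num_active y1 (ins (small n x) k))).
  by rewrite mem_filter -Ex ax mem_iota.
rewrite -(perm_mem (G2 _ _ pw' aw')) in mk.
case/mapP: mk => k' /[!mem_filter] /andP [ak' _] Ek'.
exists (ins w' k'); split => //; first exact: perm_ins.
move=> j; rewrite leq_eqVlt => /orP [/eqP ->|jn].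
- by rewrite (small_id px) (small_id (perm_ins _ pw')).
- rewrite ltnS in jn.
  by rewrite -(small_small x jn) (small_ins _ pw' jn) Fw.
Qed.

Lemma uniq_map_in (f : nat -> nat) s a b : uniq (map f s) -> a \in s -> b \in s -> f a = f b -> a = b.
Proof.
elim: s => [//|c s IH] /= /andP [nf U].
rewrite !in_cons => /orP [/eqP ->|aS] /orP [/eqP ->|bS] //.
- by move=> E; move: nf; rewrite E (map_f f bS).
- by move=> E; move: nf; rewrite -E (map_f f aS).
- exact: IH.
Qed.

Lemma uniq_corr y : GP y -> AC y -> forall n x1 x2, is_perm n x1 -> is_perm n x2 ->
  avoids y x1 -> avoids y x2 -> FL y y n x1 x2 -> x1 = x2.
Proof.
move=> G A; elim=> [|n IH] x1 x2 p1 p2 a1 a2 F.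
  by rewrite (perm0 p1) (perm0 p2).
have [k1 kn1 E1] := perm_dec p1.
have [k2 kn2 E2] := perm_dec p2.
have pw1 := perm_small p1 (leqnSn n).
have pw2 := perm_small p2 (leqnSn n).
have ew : small n x1 = small n x2.
  apply: IH => //; try exact: A.
  by move=> j jn; rewrite !small_small //; apply: F; apply: leqW.
have aw := A _ _ p1 a1.
have Ex : num_active y x1 = num_active y x2.
  by have := F n.+1 (leqnn _); rewrite (small_id p1) (small_id p2).
have U := perm_uniq (G _ _ pw1 aw); rewrite iota_uniq in U.
have kk : k1 = k2.
  apply: (uniq_map_in U).
  - by rewrite mem_filter -E1 a1 mem_iota.
  - by rewrite mem_filter ew -E2 a2 mem_iota.
  - by rewrite /= -E1 ew -E2.
by rewrite E1 E2 ew kk.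
Qed.

Lemma sig_FL y1 y2 n x1 x2 : FL y1 y2 n x1 x2 -> signature n y1 x1 = signature n y2 x2.
Proof.
move=> F; apply/eq_in_map => j; rewrite mem_iota => /andP [j1 jn].
by apply: F; lia.
Qed.

Lemma small0 n x : is_perm n x -> small 0 x = [::].
Proof. by move=> px; apply: perm0; apply: perm_small px (leq0n n). Qed.

Lemma small1 n x : is_perm n.+1 x -> small 1 x = [:: 1].
Proof. by move=> px; apply: perm_small_eq => //; apply: perm_small px _. Qed.

Lemma FL_sig y1 y2 n x1 x2 : is_perm n x1 -> is_perm n x2 ->
  num_active y1 [::] = num_active y2 [::] -> num_active y1 [:: 1] = num_active y2 [:: 1] ->
  signature n y1 x1 = signature n y2 x2 -> FL y1 y2 n x1 x2.
Proof.
move=> p1 p2 E0 E1 S j jn.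
case: j jn => [|[|j]] jn.
- by rewrite (small0 p1) (small0 p2).
- case: n p1 p2 S jn => [//|n] p1 p2 S _.
  by rewrite (small1 p1) (small1 p2).
- have := congr1 (nth 0 ^~ (n - j.+2)) S; rewrite /signature.
  have sz : n - j.+2 < size (iota 1 n.-1) by rewrite size_iota; lia.
  rewrite !(nth_map 0) // nth_iota; last by rewrite size_iota in sz.
  by have -> : n.+1 - (1 + (n - j.+2)) = j.+2 by lia.
Qed.

Lemma star_small132 x : size x < 3 -> contains132star x = false.
Proof. by move=> sx; apply/negbTE/negP => /star132P [a [b [ab bs _ _]]]; lia. Qed.

Lemma star_small123 x : size x < 3 -> contains123star x = false.
Proof. by move=> sx; apply/negbTE/negP => /star123P [a [b [ab bs _ _]]]; lia. Qed.

Lemma star_corr n x x' : is_perm n x -> is_perm n x' -> avoids p123 x -> avoids p132 x' ->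
  FL p123 p132 n x x' -> contains132star x = contains123star x'.
Proof.
elim: n x x' => [|n IH] x x' px px' ax ax' F.
  by rewrite !star_small132 ?star_small123 ?(perm_size' px) ?(perm_size' px').
case: n IH px px' F => [|n] IH px px' F.
  by rewrite !star_small132 ?star_small123 ?(perm_size' px) ?(perm_size' px').
rewrite (loc123 px ax) (loc132 px' ax').
have pw := perm_small px (leqnSn n.+1).
have pw' := perm_small px' (leqnSn n.+1).
rewrite (IH _ _ pw pw' (AC123 px ax) (AC132 px' ax')); last first.
  by move=> j jn; rewrite !small_small //; apply: F; apply: leqW.
have := F n.+2 (leqnn _); rewrite (small_id px) (small_id px') => ->.
rewrite (F n.+1 (leqnSn _)) (F n (leqW (leqnSn _))).
by [].
Qed.

Lemma E0 : num_active p123 [::] = num_active p132 [::]. Proof. by vm_compute. Qed.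
Lemma E1 : num_active p123 [:: 1] = num_active p132 [:: 1]. Proof. by vm_compute. Qed.
Lemma A0 : avoids p132 [::]. Proof. by vm_compute. Qed.
Lemma A0' : avoids p123 [::]. Proof. by vm_compute. Qed.

Lemma west_spec n x : is_perm n x -> avoids p123 x ->
  [/\ is_perm n (west n x), avoids p132 (west n x) & FL p123 p132 n x (west n x)].
Proof.
move=> px ax.
have [x' [px' ax' F]] := exist_corr GP123 GP132 AC123 E0 A0 px ax.
have inf : x' \in [seq x' <- permutations (iota 1 n) | avoids p132 x' && (signature n p132 x' == signature n p123 x)].
  by rewrite mem_filter ax' (sig_FL F) eqxx mem_permutations.
have : west n x \in [seq x' <- permutations (iota 1 n) | avoids p132 x' && (signature n p132 x' == signature n p123 x)].
  by move: inf; rewrite /west; case: (filter _ _) => [//|h t] _ /=; apply: mem_head.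
rewrite mem_filter mem_permutations => /andP [/andP [aw /eqP Sw] pw].
split => //; apply: FL_sig => //; try by rewrite Sw.
Qed.

Unset Implicit Arguments.
Theorem theorem3p18 (n : nat) :
  (* west maps Av_n(123,132-star) into Av_n(132,123-star) *)
  (forall x, inA n x -> inB n (west n x)) /\
  (* injectively *)
  (forall x1 x2, inA n x1 -> inA n x2 -> west n x1 = west n x2 -> x1 = x2) /\
  (* and onto *)
  (forall x', inB n x' -> exists2 x, inA n x & west n x = x') /\
  (* in particular the two classes are equinumerous *)
  count (inA n) (permutations (iota 1 n)) = count (inB n) (permutations (iota 1 n)).
Proof.
have H1 : forall x, inA n x -> inB n (west n x).
  move=> x /and3P [px ax sx]; have [pw aw F] := west_spec px ax.
  by rewrite /inB pw aw /= -(star_corr px pw ax aw F).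
have H2 : forall x1 x2, inA n x1 -> inA n x2 -> west n x1 = west n x2 -> x1 = x2.
  move=> x1 x2 /and3P [p1 a1 _] /and3P [p2 a2 _] E.
  have [pw1 aw1 F1] := west_spec p1 a1; have [_ _ F2] := west_spec p2 a2.
  apply: (uniq_corr GP123 AC123 p1 p2 a1 a2) => j jn.
  by rewrite F1 // E F2.
have H3 : forall x', inB n x' -> exists2 x, inA n x & west n x = x'.
  move=> x' /and3P [px' ax' sx'].
  have [x [px ax F]] := exist_corr GP132 GP123 AC132 (esym E0) A0' px' ax'.
  have F' : FL p123 p132 n x x' by move=> j jn; rewrite F.
  exists x; first by rewrite /inA px ax /= (star_corr px px' ax ax' F').
  have [pw aw Fw] := west_spec px ax.
  apply: (uniq_corr GP132 AC132 pw px' aw ax') => j jn.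
  by rewrite -Fw // F'.
split => //; split => //; split => //.
rewrite -!size_filter -(size_map (west n)); apply: perm_size; apply: uniq_perm.
- rewrite map_inj_in_uniq ?filter_uniq ?permutations_uniq //.
  by move=> a b; rewrite !mem_filter => /andP [Aa _] /andP [Ab _]; apply: H2.
- by rewrite filter_uniq ?permutations_uniq.
- move=> y; apply/mapP/idP.
  + case=> x; rewrite mem_filter => /andP [Ax _] ->.
    rewrite mem_filter H1 // mem_permutations.
    by case/and3P: (H1 x Ax).
  + rewrite mem_filter => /andP [By _]; have [x Ax <-] := H3 y By.
    exists x => //; rewrite mem_filter Ax mem_permutations.
    by case/and3P: Ax.
Qed.
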